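(* Let $T$ be a countable tree without leaves (vertices of infinite degree allowed) with root $o$, $P=(p(x,y))$ a stochastic nearest-neighbour transition matrix on $T$, and $\lambda\in\mathbb C$. Suppose the oriented edges carry $\lambda$-weights $f(x,y)$ satisfying for every vertex $x$ and neighbour $y$: (i) $f(x,y)f(y,x)\ne1$; (ii) $u(x,x)=\sum_{v\sim x}p(x,v)f(v,x)$ converges absolutely and $u(x,x)\ne\lambda$; (iii) $\lambda f(x,y)=p(x,y)+(u(x,x)-p(x,y)f(y,x))f(x,y)$; extend $f$ by $f(x,x)=1$ and multiplicatively along geodesics, and let $k(x,w)=f(x,x\wedge w)/f(o,x\wedge w)$. Then a function $h:T\to\mathbb C$ satisfies $Ph=\lambda h$ (i.e. $\sum_{y\sim x}p(x,y)h(y)$ converges absolutely and equals $\lambda h(x)$ for all $x$) if and only if it is of the form $h(x)=\int_{\partial T}k(x,\xi)\,d\nu(\xi)$ for a strong complex distribution $\nu$ on $\partial T$. The distribution $\nu$ is determined by $h$: $\nu=\nu^h$, where $$\nu^h(\partial T)=h(o),\qquad \nu^h(\partial T_x)=f(o,x)\,\frac{h(x)-f(x,x^-)h(x^-)}{1-f(x^-,x)f(x,x^-)}\quad (x\ne o).$$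
   Context: Nearest-neighbour stochastic: $p(x,y)>0$ iff $x\sim y$, rows sum to $1$. $\pi(x,y)$ is the geodesic from $x$ to $y$. Ends: equivalence classes of rays (non-backtracking infinite paths, equivalent if they differ by finitely many initial vertices); $\partial T$ is the set of ends. $T_x$ is the subtree spanned by all $w$ with $x\in\pi(o,w)$; $\partial T_x$ the set of ends with a representative ray in $T_x$; $\partial T_o=\partial T$. For $x\ne o$, $x^-$ is the neighbour of $x$ on $\pi(o,x)$. The confluent $v\wedge w$ is the last common element of $\pi(o,v)$ and $\pi(o,w)$. A distribution on $\partial T$ is a complex finitely additive set function on the algebra of finite disjoint unions of sets $\partial T_x\setminus\bigcup_{y\in S}\partial T_y$ ($S$ a finite set of vertices $y$ with $y^-=x$); integrals of locally constant functions $\varphi=\sum c_i\mathbf 1_{A_i}$ (disjoint $A_i$ in this algebra) are $\sum c_i\nu(A_i)$. It is strong if for each $x$, $\sum_{y:y^-=x}\nu(\partial T_y)$ converges absolutely (to $\nu(\partial T_x)$). For each $x$, $\xi\mapsto k(x,\xi)$ is locally constant. *)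

(* Defs.v *)
From HB Require Import structures.
From mathcomp Require Import all_boot all_order all_algebra.
From mathcomp Require Import all_classical all_reals all_analysis.
From mathcomp Require Import complex.
Set Implicit Arguments. Unset Strict Implicit. Unset Printing Implicit Defensive.
Import Order.TTheory GRing.Theory Num.Theory.
Import numFieldNormedType.Exports.
Local Open Scope classical_set_scope.
Local Open Scope ring_scope.

(* A countable rooted tree, given by its troot o and the parent map     *)
(* x |-> x^- (with o^- := o by convention).  Every vertex reaches the   *)
(* troot after finitely many steps; x ~ y iff one is the parent of the  *)
(* other.  This is exactly a (connected, acyclic) tree rooted at o.     *)
Record rtree := RTree {
  vert :> countType;
  troot : vert;
  par : vert -> vert;
  par_root : par troot = troot;
  par_fin : forall x, exists n, iter n par x == troot
}.

Section Tree.
Variable T : rtree.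
Local Notation o := (troot T).
Local Notation par := (@par T).

Definition adj (x y : T) : bool :=
  ((x != o) && (par x == y)) || ((y != o) && (par y == x)).
Definition child (x y : T) : bool := (y != o) && (par y == x).

Definition no_leaves : Prop :=
  forall x : T, exists y z : T, [/\ y != z, adj x y & adj x z].

Definition depth (x : T) : nat := ex_minn (par_fin x).

Definition anc (a w : T) : bool :=
  (depth a <= depth w)%N && (iter (depth w - depth a)%N par w == a).

(* the confluent x /\ w : last common vertex of pi(o,x) and pi(o,w) *)
Definition confl (x w : T) : T :=
  iter (find (fun i => anc (iter i par x) w) (iota 0 (depth x).+1)) par x.

(* ends: each end has a unique representative ray starting at o;
   we represent the end by that ray (o = r 0, r (n+1) a child of r n) *)
Definition is_ray (r : nat -> T) : Prop :=
  r 0 = o /\ forall n, child (r n) (r n.+1).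
Definition ends := {r : nat -> T | is_ray r}.

Definition bd (x : T) : set ends := [set e | exists n, sval e n = x].

(* x /\ xi for an end xi : last vertex of pi(o,x) lying on the ray of xi *)
Definition confl_end (x : T) (e : ends) : T :=
  iter (find (fun i => sval e (depth (iter i par x)) == iter i par x)
             (iota 0 (depth x).+1)) par x.

(* absolutely convergent sums over the vertices y with r x y, using the
   enumeration of the countable vertex set (order-independent by absolute
   convergence):  "sum_{y : r x y} g y converges absolutely to s" *)
Definition rterm (K : zmodType) (r : rel T) (x : T) (g : T -> K) (n : nat) : K :=
  if @pickle_inv T n is Some y then (if r x y then g y else 0) else 0.
Definition abs_sum (K : numFieldType) (r : rel T) (x : T) (g : T -> K) (s : K)
  : Prop :=
  cvgn (series (fun n => `|rterm r x g n|)) /\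
  series (rterm r x g) @ \oo --> s.

Definition nn_stochastic (R : realType) (p : T -> T -> R) : Prop :=
  (forall x y, 0 <= p x y) /\ (forall x y, (0 < p x y) = adj x y) /\
  (forall x, abs_sum adj x (p x) 1).

Definition eigenfun (R : realType) (p : T -> T -> R) (lam : R[i])
  (h : T -> R[i]) : Prop :=
  forall x, abs_sum adj x (fun y => (p x y)%:C%C * h y) (lam * h x).

Definition fext (R : realType) (f : T -> T -> R[i]) (x w : T) : R[i] :=
  let c := confl x w in
  (\prod_(i < (depth x - depth c)%N) f (iter i par x) (iter i.+1 par x)) *
  (\prod_(i < (depth w - depth c)%N) f (iter i.+1 par w) (iter i par w)).

Definition kend (R : realType) (f : T -> T -> R[i]) (x : T) (e : ends) : R[i] :=
  fext f x (confl_end x e) / fext f o (confl_end x e).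

(* the algebra of finite disjoint unions of the sets
   \partial T_x \ U_{y in S} \partial T_y, S a finite set of children of x *)
Definition basic (x : T) (S : seq T) : set ends :=
  [set e | bd x e /\ forall y, y \in S -> ~ bd y e].

Definition in_alg (A : set ends) : Prop :=
  exists l : seq (T * seq T),
    [/\ forall a, a \in l -> all (child a.1) a.2,
        forall i j, (i < j < size l)%N ->
          basic (nth (o, [::]) l i).1 (nth (o, [::]) l i).2 `&`
          basic (nth (o, [::]) l j).1 (nth (o, [::]) l j).2 = set0
      & A = \bigcup_(a in [set a | a \in l]) basic a.1 a.2].

Definition distribution (R : realType) (nu : set ends -> R[i]) : Prop :=
  forall A B, in_alg A -> in_alg B -> A `&` B = set0 ->
    nu (A `|` B) = nu A + nu B.

Definition strong_distribution (R : realType) (nu : set ends -> R[i]) : Prop :=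
  distribution nu /\ forall x, abs_sum child x (fun y => nu (bd y)) (nu (bd x)).

(* I = int phi dnu, for phi = sum_i c_i 1_{A_i} locally constant
   (A_i disjoint sets of the algebra) *)
Definition lc_integral (R : realType) (nu : set ends -> R[i])
  (phi : ends -> R[i]) (I : R[i]) : Prop :=
  exists l : seq (R[i] * set ends),
    [/\ forall a, a \in l -> in_alg a.2,
        forall i j, (i < j < size l)%N ->
          (nth (0, set0) l i).2 `&` (nth (0, set0) l j).2 = set0,
        forall e, phi e = \sum_(a <- l) a.1 * (e \in a.2)%:R
      & I = \sum_(a <- l) a.1 * nu a.2].

Definition nuh (R : realType) (f : T -> T -> R[i]) (h : T -> R[i]) (x : T)
  : R[i] :=
  fext f o x * ((h x - f x (par x) * h (par x)) /
                (1 - f (par x) x * f x (par x))).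

End Tree.

(* Main.v *)
Require Import Defs.
From HB Require Import structures.
From mathcomp Require Import all_boot all_order all_algebra.
From mathcomp Require Import all_classical all_reals all_analysis.
From mathcomp Require Import complex.
From mathcomp Require Import ring lra.
Import Order.TTheory GRing.Theory Num.Theory.
Import numFieldNormedType.Exports.
Local Open Scope classical_set_scope.
Local Open Scope ring_scope.
Set Implicit Arguments. Unset Strict Implicit. Unset Printing Implicit Defensive.
Section TreeBasics.
Variable T : rtree.
Local Notation o := (troot T).
Local Notation par := (@par T).

Lemma iter_par_o n : iter n par o = o.
Proof. by elim: n => //= n ->; rewrite par_root. Qed.

Lemma depthP (x : T) : iter (depth x) par x = o.
Proof. by rewrite /depth; case: ex_minnP => n /eqP. Qed.

Lemma depth_min (x : T) n : iter n par x = o -> (depth x <= n)%N.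
Proof. by rewrite /depth; case: ex_minnP => m _ H E; apply: H; apply/eqP. Qed.

Lemma depth_o : depth o = 0%N.
Proof. by apply/eqP; rewrite -leqn0; apply: depth_min. Qed.

Lemma depth0 (x : T) : depth x = 0%N -> x = o.
Proof. by move=> H; have := depthP x; rewrite H. Qed.

Lemma depth_par (x : T) : x != o -> depth x = (depth (par x)).+1.
Proof.
move=> xo; have := depthP x; case E: (depth x) => [|m] H.
  by rewrite /= in H; rewrite H eqxx in xo.
apply/eqP; rewrite eqn_leq; apply/andP; split.
  rewrite -E; apply: depth_min; by rewrite iterSr depthP.
rewrite ltnS; apply: depth_min; by rewrite -iterSr.
Qed.

Lemma depth_par_le (x : T) : (depth (par x) <= depth x)%N.
Proof.
case: (eqVneq x o) => [->|xo]; first by rewrite par_root.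
by rewrite (depth_par xo).
Qed.

Lemma depth_iter (x : T) i : (i <= depth x)%N -> depth (iter i par x) = (depth x - i)%N.
Proof.
elim: i => [|i IH] Hi; first by rewrite subn0.
have IH' := IH (ltnW Hi).
have ne : iter i par x != o.
  apply/eqP => E; move: IH'; rewrite E depth_o => /esym/eqP; rewrite subn_eq0.
  by rewrite leqNgt Hi.
rewrite iterS; move: (depth_par ne); rewrite IH' => E.
by apply/eqP; rewrite -(eqn_add2r 1) !addn1 -E subnSK.
Qed.

Lemma iter_depth_ge (x : T) i : (depth x <= i)%N -> iter i par x = o.
Proof. by move=> H; rewrite -(subnK H) iterD depthP iter_par_o. Qed.

Lemma par_neq (x : T) : x != o -> par x != x.
Proof.
move=> xo; apply/eqP => E; have := depth_par xo; rewrite E => /eqP.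
by rewrite eqn_leq ltnn andbF.
Qed.

Lemma child_depth (x y : T) : child x y -> depth y = (depth x).+1.
Proof. by case/andP => yo /eqP <-; apply: depth_par. Qed.

Lemma child_par (x y : T) : child x y -> par y = x.
Proof. by case/andP => _ /eqP. Qed.

Lemma adjE (x y : T) : adj x y = ((x != o) && (par x == y)) || child x y.
Proof. by []. Qed.

Lemma ray_depth (r : nat -> T) : is_ray r -> forall n, depth (r n) = n.
Proof.
case=> r0 rc; elim=> [|n IH]; first by rewrite r0 depth_o.
by rewrite (child_depth (rc n)) IH.
Qed.

Lemma ray_par (r : nat -> T) : is_ray r -> forall n, par (r n.+1) = r n.
Proof. by case=> _ rc n; apply: child_par. Qed.

Lemma ray_iter (r : nat -> T) : is_ray r -> forall k n, (k <= n)%N ->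
  iter (n - k) par (r n) = r k.
Proof.
move=> rr k n; elim: n => [|n IH].
  by rewrite leqn0 => /eqP ->.
rewrite leq_eqVlt => /orP [/eqP ->|]; first by rewrite subnn.
rewrite ltnS => kn; rewrite subSn // iterSr (ray_par rr); exact: IH.
Qed.

Lemma bdE (w : T) (e : ends T) : bd w e <-> sval e (depth w) = w.
Proof.
split; last by move=> H; exists (depth w).
case=> n H; have := ray_depth (svalP e) n; rewrite H => ->; done.
Qed.

Lemma bd_o (e : ends T) : bd o e.
Proof. by exists 0%N; case: (svalP e). Qed.

Lemma bd_par (x : T) (e : ends T) : bd x e -> bd (par x) e.
Proof.
case: (eqVneq x o) => [->|xo]; first by rewrite par_root.
move=> /bdE H; apply/bdE; move: (depth_par xo) => D.
by rewrite -(ray_par (svalP e)) -D H.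
Qed.

Lemma bd_iter (x : T) (e : ends T) i : bd x e -> bd (iter i par x) e.
Proof. by elim: i => //= i IH /IH; apply: bd_par. Qed.

Lemma bd_same (u v : T) (e1 e2 : ends T) : bd v e1 -> bd v e2 ->
  (depth u <= depth v)%N -> (bd u e1 <-> bd u e2).
Proof.
move=> /bdE H1 /bdE H2 duv.
have E1 := ray_iter (svalP e1) duv; have E2 := ray_iter (svalP e2) duv.
rewrite H1 in E1; rewrite H2 in E2.
split => /bdE H; apply/bdE.
  by rewrite -E2 E1.
by rewrite -E1 E2.
Qed.

Lemma bd_child_uniq (v c c' : T) (e : ends T) : child v c -> child v c' ->
  bd c e -> bd c' e -> c = c'.
Proof.
move=> h h' /bdE H /bdE H'.
by rewrite -H -H' (child_depth h) (child_depth h').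
Qed.

Lemma bd_child_ex (v : T) (e : ends T) : bd v e -> exists c, child v c /\ bd c e.
Proof.
move=> /bdE H; exists (sval e (depth v).+1); split.
  by rewrite -{1}H; case: (svalP e).
by exists (depth v).+1.
Qed.

Lemma bd_childE (v c : T) (e : ends T) : child v c -> bd c e ->
  sval e (depth c) = c.
Proof. by move=> _ /bdE. Qed.

Hypothesis nl : no_leaves T.

Lemma ex_child (x : T) : exists y, child x y.
Proof.
have [y [z [yz axy axz]]] := nl x.
move: axy axz; rewrite !adjE.
case/orP => [/andP [_ /eqP py]|]; last by exists y.
case/orP => [/andP [_ /eqP pz]|]; last by exists z.
by move: yz; rewrite -py -pz eqxx.
Qed.

Definition ch (x : T) : T := xchoose (ex_child x).
Lemma ch_child x : child x (ch x).
Proof. exact: xchooseP. Qed.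

Definition rayw (w : T) (n : nat) : T :=
  if (n <= depth w)%N then iter (depth w - n) par w else iter (n - depth w) ch w.

Lemma rayw_ray (w : T) : is_ray (rayw w).
Proof.
split; first by rewrite /rayw leq0n subn0 depthP.
move=> n; rewrite /rayw.
case: (ltngtP n (depth w)) => H.
- have E : (depth w - n = (depth w - n.+1).+1)%N by rewrite subnSK.
  rewrite E iterS.
  have ne : iter (depth w - n.+1) par w != o.
    apply/eqP => /(f_equal (@depth T)); rewrite depth_iter ?leq_subr // depth_o.
    by rewrite subKn.
  by rewrite /child ne eqxx.
- by rewrite subSn ?(ltnW H) // iterS ch_child.
- by rewrite H subnn subSn // subnn /= ch_child.
Qed.

Lemma ex_end (w : T) : exists e : ends T, bd w e.
Proof.
exists (exist _ _ (rayw_ray w)); exists (depth w).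
by rewrite /= /rayw leqnn subnn.
Qed.

End TreeBasics.
Lemma find_iota_eq (a : pred nat) m j : (j < m)%N -> a j ->
  (forall i, (i < j)%N -> ~~ a i) -> find a (iota 0 m) = j.
Proof.
move=> jm aj nb.
have hs : has a (iota 0 m) by apply/hasP; exists j => //; rewrite mem_iota.
have fs : (find a (iota 0 m) < m)%N by move: hs; rewrite has_find size_iota.
case: (ltngtP (find a (iota 0 m)) j) => // H.
- have := nth_find 0%N hs; rewrite nth_iota // add0n.
  by move: (nb _ H) => /negbTE ->.
- have := before_find 0%N H; rewrite nth_iota ?(ltn_trans H) // add0n.
  by rewrite aj.
Qed.

Section Confl.
Variable T : rtree.
Local Notation o := (troot T).
Local Notation par := (@par T).

Lemma confl_endP (x : T) (e : ends T) : exists i,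
  [/\ (i <= depth x)%N, confl_end x e = iter i par x, bd (iter i par x) e &
      forall j, (j < i)%N -> ~ bd (iter j par x) e].
Proof.
set P := (fun i => sval e (depth (iter i par x)) == iter i par x).
have PE : forall i, P i = `[< bd (iter i par x) e >].
  move=> i; rewrite /P; apply/idP/idP.
    move/eqP => H; apply/asboolP; apply/bdE; exact: H.
  move/asboolP => H; apply/eqP; apply/bdE; exact: H.
have hs : has P (iota 0 (depth x).+1).
  apply/hasP; exists (depth x); first by rewrite mem_iota add0n ltnS leqnn.
  rewrite PE depthP; apply/asboolP; exact: bd_o.
set i := find P (iota 0 (depth x).+1).
have fs : (i < (depth x).+1)%N by move: hs; rewrite has_find size_iota.
exists i; split => //.
- have := nth_find 0%N hs; rewrite nth_iota // add0n PE.
  by move/asboolP.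
- move=> j ji; have := before_find 0%N ji; rewrite nth_iota ?(ltn_trans ji) //.
  by rewrite add0n PE => /negbT/asboolPn.
Qed.

Lemma least_uniq (Q : nat -> Prop) a b : Q a -> (forall j, (j < a)%N -> ~ Q j) ->
  Q b -> (forall j, (j < b)%N -> ~ Q j) -> a = b.
Proof.
move=> Qa na Qb nb; case: (ltngtP a b) => // H.
- by case: (nb _ H).
- by case: (na _ H).
Qed.

Lemma confl_end_in (x : T) (e : ends T) : bd x e -> confl_end x e = x.
Proof.
move=> H; have [i [_ -> _ nb]] := confl_endP x e.
case: i nb => // i nb; by case: (nb 0%N).
Qed.

Lemma confl_end_out (x : T) (e : ends T) : x != o -> ~ bd x e ->
  confl_end x e = confl_end (par x) e.
Proof.
move=> xo H; have [i [_ -> bi nb]] := confl_endP x e.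
have [i' [_ -> bi' nb']] := confl_endP (par x) e.
case: i bi nb => [//|i] bi nb.
rewrite iterSr in bi *.
have -> // : i = i'.
apply: (least_uniq (Q := fun k => bd (iter k par (par x)) e)) => // j ji.
by rewrite -iterSr; apply: nb.
Qed.

Lemma confl_end_anc (x : T) (e : ends T) :
  exists2 i, (i <= depth x)%N & confl_end x e = iter i par x.
Proof. by have [i [? ? _ _]] := confl_endP x e; exists i. Qed.

Lemma confl_end_o (e : ends T) : confl_end o e = o.
Proof. by rewrite /confl_end iter_par_o. Qed.

Lemma confl_anc (y : T) j : (j <= depth y)%N -> confl y (iter j par y) = iter j par y.
Proof.
move=> jy; rewrite /confl; congr iter.
apply: find_iota_eq => //.
  by rewrite /anc leqnn subnn eqxx.
move=> i ij; rewrite /anc !depth_iter ?(leq_trans (ltnW ij)) //.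
rewrite leq_sub2lE ?(leq_trans (ltnW ij)) //.
by rewrite leqNgt ij.
Qed.

Variable R : realType.
Variable f : T -> T -> R[i].

Lemma fext_anc (y : T) j : (j <= depth y)%N ->
  fext f y (iter j par y) = \prod_(i < j) f (iter i par y) (iter i.+1 par y).
Proof.
move=> jy; rewrite /fext confl_anc // depth_iter // subKn // subnn big_ord0 mulr1.
done.
Qed.

Lemma fext_self (y : T) : fext f y y = 1.
Proof. by have := fext_anc (y := y) (leq0n _); rewrite big_ord0. Qed.

Lemma fext_o (w : T) :
  fext f o w = \prod_(i < depth w) f (iter i.+1 par w) (iter i par w).
Proof.
rewrite /fext /confl iter_par_o depth_o subnn big_ord0 mul1r subn0 //.
Qed.

Lemma fext_o_par (x : T) : x != o -> fext f o x = fext f o (par x) * f (par x) x.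
Proof.
move=> xo; rewrite !fext_o (depth_par xo) big_ord_recl /= mulrC.
congr (_ * _); apply: eq_bigr => i _; by rewrite add0n -iterSr.
Qed.

Lemma fext_step (x : T) i : (i <= depth (par x))%N -> x != o ->
  fext f x (iter i par (par x)) = f x (par x) * fext f (par x) (iter i par (par x)).
Proof.
move=> ip xo; have E : iter i par (par x) = iter i.+1 par x by rewrite iterSr.
rewrite {1}E (@fext_anc x i.+1); last by rewrite (depth_par xo).
rewrite fext_anc // big_ord_recl /=; congr (_ * _).
by apply: eq_bigr => k _; rewrite add0n -iterSr.
Qed.

Lemma kend_o (e : ends T) : kend f o e = 1.
Proof. by rewrite /kend confl_end_o fext_self divr1. Qed.

Lemma kend_in (x : T) (e : ends T) : bd x e -> kend f x e = (fext f o x)^-1.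
Proof. by move=> H; rewrite /kend confl_end_in // fext_self div1r. Qed.

Lemma kend_out (x : T) (e : ends T) : x != o -> ~ bd x e ->
  kend f x e = f x (par x) * kend f (par x) e.
Proof.
move=> xo H; rewrite /kend (confl_end_out xo H).
have [i ip ->] := confl_end_anc (par x) e.
by rewrite fext_step // mulrA.
Qed.

End Confl.
Section Lists.
Variable T : rtree.
Local Notation o := (troot T).
Local Notation par := (@par T).
Variable K : numFieldType.

Definition ind (A : set (ends T)) (e : ends T) : K := (e \in A)%:R.
Definition ev (d : seq (T * K)) (e : ends T) : K := \sum_(a <- d) a.2 * ind (bd a.1) e.
Definition pairN (d : seq (T * K)) (N : T -> K) : K := \sum_(a <- d) a.2 * N a.1.
Definition coef (d : seq (T * K)) (u : T) : K := \sum_(a <- d) a.2 * (a.1 == u)%:R.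
Definition FCA (N : T -> K) : Prop := forall (v : T) (cs : seq T), uniq cs ->
  (forall c, (c \in cs) = child v c) -> N v = \sum_(c <- cs) N c.
Definition muw (d : seq (T * K)) : nat := (\sum_(a <- d) 2 ^ depth a.1)%N.

Lemma indT (A : set (ends T)) e : A e -> ind A e = 1.
Proof. by move=> H; rewrite /ind mem_set. Qed.
Lemma indF (A : set (ends T)) e : ~ A e -> ind A e = 0.
Proof. by move=> H; rewrite /ind memNset. Qed.

Lemma ind_bd_eq (u w : T) e : bd u e -> depth w = depth u -> ind (bd w) e = (w == u)%:R.
Proof.
move=> /bdE Hu dw; case: (eqVneq w u) => [->|wu].
  by rewrite indT //; apply/bdE.
by rewrite indF // => /bdE; rewrite dw Hu => E; rewrite E eqxx in wu.
Qed.

Lemma sum_sel (G : T -> K) (cs : seq T) x : uniq cs ->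
  \sum_(c <- cs) (x == c)%:R * G c = if x \in cs then G x else 0.
Proof.
elim: cs => [|c cs IH]; first by rewrite big_nil.
rewrite /= big_cons in_cons => /andP [ncs ucs]; rewrite IH //.
case: (eqVneq x c) => [->|xc] /=.
  by rewrite (negbTE ncs) mul1r addr0.
by rewrite mul0r add0r.
Qed.

Lemma split_w (d : seq (T * K)) (w : T) (G : T -> K) :
  \sum_(a <- d) a.2 * G a.1 =
  \sum_(a <- [seq a <- d | a.1 != w]) a.2 * G a.1 + coef d w * G w.
Proof.
rewrite big_filter [LHS](bigID (fun a => a.1 != w)) /=; congr (_ + _).
rewrite /coef big_distrl /= [RHS](bigID (fun a => a.1 != w)) /=.
rewrite [X in _ = X + _]big1 ?add0r; last by move=> a H; rewrite (negbTE H) mulr0 mul0r.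
by apply: eq_bigr => a; rewrite negbK => /eqP ->; rewrite eqxx mulr1.
Qed.

Lemma ev_diff (d : seq (T * K)) (u1 u2 : T) e1 e2 :
  (forall a, a \in d -> (depth a.1 <= depth u1)%N) -> depth u1 = depth u2 ->
  par u1 = par u2 -> u1 != o -> bd u1 e1 -> bd u2 e2 ->
  ev d e1 - ev d e2 = coef d u1 - coef d u2.
Proof.
move=> Hd d12 p12 u1o b1 b2.
rewrite /ev /coef -!sumrB; apply: eq_big_seq => a ad.
rewrite -!mulrBr; congr (_ * _).
have := Hd a ad; rewrite leq_eqVlt => /orP [/eqP da|lt].
  by rewrite (ind_bd_eq b1 da) (ind_bd_eq b2 (etrans da d12)).
have ne1 : a.1 != u1 by apply/eqP => E; rewrite E ltnn in lt.
have ne2 : a.1 != u2 by apply/eqP => E; rewrite E -d12 ltnn in lt.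
rewrite (negbTE ne1) (negbTE ne2) subrr.
have bp1 := bd_par b1; have bp2 := bd_par b2; rewrite -p12 in bp2.
have dle : (depth a.1 <= depth (par u1))%N by rewrite -ltnS -(depth_par u1o).
have := bd_same bp1 bp2 dle.
case: (pselect (bd a.1 e1)) => H1 [Hf Hb].
  by rewrite (indT H1) (indT (Hf H1)) subrr.
have H2 : ~ bd a.1 e2 by move=> /Hb.
by rewrite (indF H1) (indF H2) subrr.
Qed.

Lemma max_elem (A : eqType) (g : A -> nat) (s : seq A) : s != [::] ->
  exists2 a, a \in s & forall b, b \in s -> (g b <= g a)%N.
Proof.
elim: s => // x s IH _; case: (eqVneq s [::]) => [->|ne].
  by exists x; rewrite ?mem_seq1 // => b; rewrite mem_seq1 => /eqP ->.
have [a as_ amax] := IH ne.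
case: (leqP (g a) (g x)) => H.
  exists x; first by rewrite in_cons eqxx.
  move=> b; rewrite in_cons => /orP [/eqP ->//|/amax]; move/leq_trans; apply.
  done.
exists a; first by rewrite in_cons as_ orbT.
move=> b; rewrite in_cons => /orP [/eqP ->|/amax //]; exact: ltnW.
Qed.

Lemma regroup (d : seq (T * K)) (v : T) (cs : seq T) (G : T -> K) : uniq cs ->
  (forall c, (c \in cs) = child v c) ->
  \sum_(b <- d | child v b.1) b.2 * G b.1 = \sum_(c <- cs) coef d c * G c.
Proof.
move=> ucs mcs; rewrite /coef.
under [RHS]eq_bigr do rewrite big_distrl /=.
rewrite exchange_big /= big_mkcond /=; apply: eq_bigr => b _.
under eq_bigr do rewrite -mulrA.
rewrite -big_distrr /= sum_sel // mcs.
by case: (child v b.1); rewrite ?mulr0.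
Qed.

Lemma sum_children_ind (v : T) (cs : seq T) e : uniq cs ->
  (forall c, (c \in cs) = child v c) ->
  \sum_(c <- cs) ind (bd c) e = ind (bd v) e.
Proof.
move=> ucs mcs; case: (pselect (bd v e)) => H.
  have [c0 [cc0 bc0]] := bd_child_ex H.
  rewrite (indT H) (eq_big_seq (fun c => (c0 == c)%:R * 1)).
    by rewrite sum_sel // mcs cc0.
  move=> c; rewrite mcs => cc; rewrite mulr1.
  case: (eqVneq c0 c) => [<-|ne]; first by rewrite indT.
  rewrite indF // => bc; move: ne; by rewrite (bd_child_uniq cc0 cc bc0 bc) eqxx.
rewrite indF // big_seq big1 // => c; rewrite mcs => cc.
rewrite indF // => bc; apply: H; rewrite -(child_par cc); exact: bd_par.
Qed.

Section PairZero.
Hypothesis nl : no_leaves T.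
Variable N : T -> K.
Hypothesis HN : FCA N.

Lemma pair0 (d : seq (T * K)) : (forall e, ev d e = 0) -> pairN d N = 0.
Proof.
move: {2}(muw d).+1 (ltnSn (muw d)) => n.
elim: n d => [|n IH] d // Hmu Hev.
case: (eqVneq d [::]) => [->|dne]; first by rewrite /pairN big_nil.
have [a ad amax] := max_elem (fun a : T * K => depth a.1) dne.
set w := a.1.
case: (eqVneq w o) => [wo|wo].
  have allo : forall b, b \in d -> b.1 = o.
    move=> b bd; apply: depth0; have := amax b bd.
    by rewrite /= -/w wo depth_o leqn0 => /eqP.
  have [e _] := ex_end nl o.
  have : ev d e = \sum_(b <- d) b.2.
    by rewrite /ev; apply: eq_big_seq => b bd; rewrite allo // (indT (bd_o e)) mulr1.
  rewrite Hev => /esym S0.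
  rewrite /pairN (eq_big_seq (fun b => b.2 * N o)); last by move=> b bd; rewrite allo.
  by rewrite -big_distrl /= S0 mul0r.
set v := par w.
have Dmax : forall b, b \in d -> (depth b.1 <= depth w)%N by exact: amax.
have [e_w bw] := ex_end nl w.
case: (pselect (exists c, child v c /\ ~~ has (fun b : T * K => b.1 == c) d)) =>
  [[c [cc nc]]|nA].
  have dc : depth c = depth w by rewrite (child_depth cc) (depth_par wo).
  have [e_c bc] := ex_end nl c.
  have pc : par c = par w by rewrite (child_par cc).
  have := ev_diff Dmax (esym dc) (esym pc) wo bw bc.
  rewrite !Hev subrr.
  have coefc : coef d c = 0.
    rewrite /coef big_seq big1 // => b bd.
    have : b.1 != c by apply: contra nc => /eqP <-; apply/hasP; exists b.
    by move/negbTE ->; rewrite mulr0.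
  rewrite coefc subr0 => /esym cw0.
  set d' := [seq b <- d | b.1 != w].
  have Hev' : forall e, ev d' e = 0.
    move=> e; rewrite -(Hev e) /ev (split_w d w (fun u => ind (bd u) e)).
    by rewrite cw0 mul0r addr0.
  have Hmu' : (muw d' < n)%N.
    rewrite -ltnS; apply: leq_trans Hmu; rewrite ltnS /muw /d' big_filter.
    rewrite [X in (_ < X)%N](bigID (fun b : T * K => b.1 != w)) /= -addn1 leq_add2l.
    rewrite lt0n sum_nat_seq_eq0; apply/allPn; exists a => //.
    by rewrite /= -/w eqxx /= expn_eq0.
  rewrite /pairN (split_w d w N) cw0 mul0r addr0; exact: IH.
have allch : forall c, child v c -> has (fun b : T * K => b.1 == c) d.
  by move=> c cc; apply/negPn/negP => nh; apply: nA; exists c.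
set cs := undup [seq b.1 | b <- d & child v b.1].
have ucs : uniq cs := undup_uniq _.
have mcs : forall c, (c \in cs) = child v c.
  move=> c; rewrite mem_undup; apply/mapP/idP.
    by case=> b; rewrite mem_filter => /andP [cb bd] ->.
  move=> cc; have /hasP [b bd /eqP bc] := allch c cc.
  by exists b => //; rewrite mem_filter bc cc bd.
have wch : child v w by rewrite /child wo eqxx.
have coefc : forall c, c \in cs -> coef d c = coef d w.
  move=> c; rewrite mcs => cc; have [e_c bc] := ex_end nl c.
  have dc : depth w = depth c by rewrite (child_depth cc) (depth_par wo).
  have pc : par w = par c by rewrite (child_par cc).
  have := ev_diff Dmax dc pc wo bw bc; rewrite !Hev subrr => /eqP.
  by rewrite eq_sym subr_eq0 => /eqP.
have decomp : forall G : T -> K, \sum_(b <- d) b.2 * G b.1 =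
    \sum_(b <- [seq b <- d | ~~ child v b.1]) b.2 * G b.1 +
    coef d w * \sum_(c <- cs) G c.
  move=> G; rewrite big_filter [LHS](bigID (fun b : T * K => ~~ child v b.1)) /=.
  congr (_ + _); under eq_bigl do rewrite negbK.
  rewrite (regroup _ _ ucs mcs) big_distrr /=; apply: eq_big_seq => c cin.
  by rewrite coefc.
set d' := (v, coef d w) :: [seq b <- d | ~~ child v b.1].
have Hev' : forall e, ev d' e = 0.
  move=> e; rewrite -(Hev e) /ev big_cons /= (decomp (fun u => ind (bd u) e)).
  by rewrite (sum_children_ind _ ucs mcs) addrC.
have Hmu' : (muw d' < n)%N.
  rewrite -ltnS; apply: leq_trans Hmu; rewrite ltnS /muw /d' big_cons /= big_filter.
  rewrite [X in (_ < X)%N](bigID (fun b : T * K => ~~ child v b.1)) /= addnC ltn_add2l.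
  apply: (@leq_trans (2 ^ depth w)).
    by rewrite (depth_par wo) ltn_exp2l.
  rewrite (big_rem _ ad) /= negbK -/w wch; exact: leq_addr.
have := IH d' Hmu' Hev'; rewrite /pairN big_cons /= (decomp N) -(HN ucs mcs).
by rewrite addrC.
Qed.

End PairZero.

End Lists.
Section Alg.
Variable T : rtree.
Local Notation o := (troot T).
Local Notation par := (@par T).
Variable R : realType.
Local Notation C := (R[i] : numFieldType).

Definition Ul (l : seq (T * seq T)) : set (ends T) :=
  \bigcup_(a in [set a | a \in l]) basic a.1 a.2.

Definition lcond (l : seq (T * seq T)) : Prop :=
  (forall a, a \in l -> all (child a.1) a.2) /\
  (forall i j, (i < j < size l)%N ->
          basic (nth (o, [::]) l i).1 (nth (o, [::]) l i).2 `&`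
          basic (nth (o, [::]) l j).1 (nth (o, [::]) l j).2 = set0).

Lemma in_algE (A : set (ends T)) : Defs.in_alg A <-> exists l, lcond l /\ A = Ul l.
Proof.
split; first by case=> l [H1 H2 H3]; exists l.
by case=> l [[H1 H2] H3]; exists l.
Qed.

Lemma Ul_nil : Ul [::] = set0.
Proof. by apply/seteqP; split => e // [a]. Qed.

Lemma Ul_cons a l : Ul (a :: l) = basic a.1 a.2 `|` Ul l.
Proof.
apply/seteqP; split => e.
  case=> b /=; rewrite in_cons => /orP [/eqP ->|bl] H; first by left.
  by right; exists b.
case=> [H|[b bl H]]; first by exists a => //=; rewrite in_cons eqxx.
by exists b => //=; rewrite in_cons bl orbT.
Qed.

Lemma lcond_cons a l : lcond (a :: l) ->
  [/\ lcond l, all (child a.1) a.2 & basic a.1 a.2 `&` Ul l = set0].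
Proof.
case=> H1 H2; split.
- split; first by move=> b bl; apply: H1; rewrite in_cons bl orbT.
  by move=> i j ij; apply: (H2 i.+1 j.+1).
- by apply: H1; rewrite in_cons eqxx.
- apply/seteqP; split => e // [Ha [b /= bl Hb]].
  have hi : (0 < (index b l).+1 < size (a :: l))%N.
    by rewrite ltn0Sn /=; rewrite ltnS index_mem.
  have := H2 _ _ hi; rewrite /= nth_index // => E.
  have : (basic a.1 a.2 `&` basic b.1 b.2) e by split.
  by rewrite E.
Qed.

Lemma in_alg_basic (x : T) (S : seq T) : all (child x) S -> Defs.in_alg (basic x S).
Proof.
move=> H; apply/in_algE; exists [:: (x, S)]; split.
  split; first by move=> a; rewrite mem_seq1 => /eqP ->.
  move=> i j /andP [ij]; rewrite /= ltnS leqn0 => /eqP jz.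
  by rewrite jz in ij.
by rewrite Ul_cons Ul_nil setU0.
Qed.

Lemma bd_basic (x : T) : bd x = basic x [::].
Proof. by apply/seteqP; split => e; [move=> H; split|case]. Qed.

Lemma in_alg_bd (x : T) : Defs.in_alg (bd x).
Proof. by rewrite bd_basic; apply: in_alg_basic. Qed.

Lemma in_alg_set0 : Defs.in_alg (@set0 (ends T)).
Proof.
apply/in_algE; exists [::]; rewrite Ul_nil; split => //; split => //.
by move=> i j /andP [_]; rewrite ltn0.
Qed.

Lemma nu0 (nu : set (ends T) -> C) : Defs.distribution nu -> nu set0 = 0.
Proof.
move=> Hd; have := Hd _ _ in_alg_set0 in_alg_set0 (setI0 _).
rewrite setU0 => /(congr1 (fun z => z - nu set0)).
by rewrite subrr addrK.
Qed.

Lemma ind_union (A B : set (ends T)) e : A `&` B = set0 ->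
  ind C (A `|` B) e = ind C A e + ind C B e.
Proof.
move=> AB; case: (pselect (A e)) => Ha.
  have Hb : ~ B e.
    move=> Hb; have : (A `&` B) e by split.
    by rewrite AB.
  have Hu : (A `|` B) e by left.
  by rewrite (indT C Hu) (indT C Ha) (indF C Hb) addr0.
case: (pselect (B e)) => Hb.
  have Hu : (A `|` B) e by right.
  by rewrite (indT C Hu) (indF C Ha) (indT C Hb) add0r.
have Hu : ~ (A `|` B) e by case.
by rewrite (indF C Hu) (indF C Ha) (indF C Hb) addr0.
Qed.

Definition dist_rep (A : set (ends T)) (d : seq (T * C)) : Prop :=
  (forall e, ev d e = ind C A e) /\
  (forall nu : set (ends T) -> C, Defs.distribution nu -> nu A = pairN d (fun w => nu (bd w))).

Lemma ev_cat (d1 d2 : seq (T * C)) e : ev (d1 ++ d2) e = ev d1 e + ev d2 e.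
Proof. by rewrite /ev big_cat. Qed.
Lemma pairN_cat (d1 d2 : seq (T * C)) N : pairN (d1 ++ d2) N = pairN d1 N + pairN d2 N.
Proof. by rewrite /pairN big_cat. Qed.

Lemma dist_rep_union A B d1 d2 : Defs.in_alg A -> Defs.in_alg B -> A `&` B = set0 ->
  dist_rep A d1 -> dist_rep B d2 -> dist_rep (A `|` B) (d1 ++ d2).
Proof.
move=> HA HB AB [e1 n1] [e2 n2]; split.
  by move=> e; rewrite ev_cat e1 e2 ind_union.
by move=> nu Hnu; rewrite pairN_cat (Hnu _ _ HA HB AB) -n1 // -n2.
Qed.

Lemma basic_split (x s : T) (S : seq T) : child x s -> s \notin S ->
  all (child x) S -> basic x S = basic x (s :: S) `|` bd s.
Proof.
move=> cs nS aS; apply/seteqP; split => e.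
  case=> bx nb; case: (pselect (bd s e)) => H; first by right.
  left; split => // y; rewrite in_cons => /orP [/eqP ->//|]; exact: nb.
case=> [[bx nb]|bs].
  by split => // y yS; apply: nb; rewrite in_cons yS orbT.
split; first by rewrite -(child_par cs); exact: bd_par.
move=> y yS by_.
have cy : child x y by move/allP: aS; apply.
have := bd_child_uniq cs cy bs by_ => E.
by rewrite E yS in nS.
Qed.

Lemma dist_rep_basic_uniq (x : T) (S : seq T) : uniq S -> all (child x) S ->
  dist_rep (basic x S) ((x, 1) :: [seq (s, -1) | s <- S]).
Proof.
elim: S => [|s S IH] /=.
  move=> _ _; rewrite -bd_basic; split.
    by move=> e; rewrite /ev big_cons big_nil /= mul1r addr0.
  by move=> nu _; rewrite /pairN big_cons big_nil /= mul1r addr0.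
move=> /andP [nS uS] /andP [cs aS].
have [Hev Hnu] := IH uS aS.
have E := basic_split cs nS aS.
have disj : basic x (s :: S) `&` bd s = set0.
  by apply/seteqP; split => e // [[_ H] H']; apply: (H s); rewrite ?in_cons ?eqxx.
have a1 : Defs.in_alg (basic x (s :: S)) by apply: in_alg_basic; rewrite /= cs aS.
split.
  move=> e; have H := Hev e; rewrite E ind_union // in H.
  rewrite /ev !big_cons /= in H *.
  apply: (addIr (ind C (bd s) e)); rewrite -H; ring.
move=> nu Hnu'; have H := Hnu nu Hnu'; rewrite E (Hnu' _ _ a1 (in_alg_bd s) disj) in H.
rewrite /pairN !big_cons /= in H *.
apply: (addIr (nu (bd s))); rewrite H; ring.
Qed.

End Alg.

Section AlgRep.
Variable T : rtree.
Variable R : realType.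
Local Notation C := (R[i] : numFieldType).

Lemma dist_rep_basic (x : T) (S : seq T) : all (child x) S ->
  exists d : seq (T * C), dist_rep (basic x S) d.
Proof.
move=> aS.
have -> : basic x S = basic x (undup S).
  apply/seteqP; split => e [H1 H2]; split => // y.
    by rewrite mem_undup; apply: H2.
  by move=> yS; apply: H2; rewrite mem_undup.
exists ((x, 1) :: [seq (s, -1) | s <- undup S]); apply: dist_rep_basic_uniq.
  exact: undup_uniq.
by apply/allP => y; rewrite mem_undup; move/allP: aS; apply.
Qed.

Lemma dist_rep_Ul (l : seq (T * seq T)) : lcond l -> exists d : seq (T * C), dist_rep (Ul l) d.
Proof.
elim: l => [|a l IH].
  move=> _; exists [::]; rewrite Ul_nil; split.
    by move=> e; rewrite /ev big_nil indF.
  by move=> nu Hnu; rewrite nu0 // /pairN big_nil.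
move=> /lcond_cons [Hl Ha Hdisj].
have [d2 H2] := IH Hl; have [d1 H1] := dist_rep_basic Ha.
exists (d1 ++ d2); rewrite Ul_cons; apply: dist_rep_union => //.
  exact: in_alg_basic.
by apply/in_algE; exists l.
Qed.

Lemma dist_rep_alg (A : set (ends T)) : Defs.in_alg A -> exists d : seq (T * C), dist_rep A d.
Proof. by move/in_algE => [l [Hl ->]]; apply: dist_rep_Ul. Qed.

Lemma FCA_dist (nu : set (ends T) -> C) : Defs.distribution nu -> FCA (fun w => nu (bd w)).
Proof.
move=> Hnu v cs ucs mcs.
have acs : all (child v) cs by apply/allP => c; rewrite mcs.
have [_ H] := dist_rep_basic_uniq R ucs acs.
have E : basic v cs = set0.
  apply/seteqP; split => e // [bv nb].
  have [c [cc bc]] := bd_child_ex bv; apply: (nb c) => //; by rewrite mcs.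
move: (H nu Hnu); rewrite E nu0 // /pairN big_cons big_map /= mul1r.
move/eqP; rewrite eq_sym addr_eq0 => /eqP ->.
by rewrite -sumrN; apply: eq_bigr => c _; rewrite mulN1r opprK.
Qed.

End AlgRep.
Section RepSec.
Variable T : rtree.
Local Notation o := (troot T).
Local Notation par := (@par T).
Variable R : realType.
Local Notation C := (R[i] : numFieldType).
Variable f : T -> T -> R[i].

Definition cx (x : T) : C := (fext f o x)^-1 - f x (par x) * (fext f o (par x))^-1.
Definition sc (k : C) (d : seq (T * C)) := [seq (a.1, k * a.2) | a <- d].

Fixpoint repn (n : nat) (x : T) : seq (T * C) :=
  match n with
  | 0 => [:: (x, 1)]
  | n'.+1 => sc (f x (par x)) (repn n' (par x)) ++ [:: (x, cx x)]
  end.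
Definition Rep (x : T) := repn (depth x) x.

Lemma ev_sc k d e : ev (sc k d) e = k * ev d e.
Proof. by rewrite /ev big_map big_distrr; apply: eq_bigr => a _ /=; rewrite mulrA. Qed.
Lemma pairN_sc k d N : pairN (sc k d) N = k * pairN d N.
Proof. by rewrite /pairN big_map big_distrr; apply: eq_bigr => a _ /=; rewrite mulrA. Qed.

Lemma Rep_o : Rep o = [:: (o, 1)].
Proof. by rewrite /Rep depth_o. Qed.

Lemma Rep_par (x : T) : x != o -> Rep x = sc (f x (par x)) (Rep (par x)) ++ [:: (x, cx x)].
Proof. by move=> xo; rewrite /Rep (depth_par xo). Qed.

Lemma ev1 (x : T) (k : C) e : ev [:: (x, k)] e = k * ind C (bd x) e.
Proof. by rewrite /ev big_cons big_nil addr0. Qed.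
Lemma pair1 (x : T) (k : C) N : pairN [:: (x, k)] N = k * N x.
Proof. by rewrite /pairN big_cons big_nil addr0. Qed.

Lemma depth_ind (P : T -> Prop) : P o -> (forall x, x != o -> P (par x) -> P x) ->
  forall x, P x.
Proof.
move=> P0 PS x; move: {2}(depth x) (erefl (depth x)) => n.
elim: n x => [|n IH] x dx; first by rewrite (depth0 dx).
have xo : x != o by apply/eqP => E; rewrite E depth_o in dx.
apply: PS => //; apply: IH; move: dx; rewrite (depth_par xo); by case.
Qed.

Lemma ev_Rep (x : T) e : ev (Rep x) e = kend f x e.
Proof.
elim/depth_ind: x => [|x xo IH].
  by rewrite Rep_o ev1 kend_o (indT C (bd_o e)) mulr1.
rewrite Rep_par // ev_cat ev_sc IH ev1.
case: (pselect (bd x e)) => H.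
  rewrite (indT C H) mulr1 !kend_in //; last exact: bd_par.
  rewrite /cx; ring.
by rewrite (indF C H) mulr0 addr0 (kend_out _ xo H).
Qed.

Lemma pairN_Rep_o N : pairN (Rep o) N = N o.
Proof. by rewrite Rep_o pair1 mul1r. Qed.

Lemma pairN_Rep (x : T) N : x != o ->
  pairN (Rep x) N = f x (par x) * pairN (Rep (par x)) N + cx x * N x.
Proof. by move=> xo; rewrite Rep_par // pairN_cat pairN_sc pair1. Qed.

Section LcValue.
Hypothesis nl : no_leaves T.
Variable N : T -> C.
Hypothesis HN : FCA N.
Variable nu : set (ends T) -> C.
Hypothesis Hrep : forall A, Defs.in_alg A ->
  exists d : seq (T * C), (forall e, ev d e = ind C A e) /\ nu A = pairN d N.

Lemma lc_list (l : seq (C * set (ends T))) : (forall a, a \in l -> Defs.in_alg a.2) ->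
  exists D : seq (T * C), (forall e, ev D e = \sum_(a <- l) a.1 * ind C a.2 e) /\
    pairN D N = \sum_(a <- l) a.1 * nu a.2.
Proof.
elim: l => [|a l IH] Hl.
  by exists [::]; split => [e|]; rewrite /ev /pairN !big_nil.
have [D [H1 H2]] : exists D : seq (T * C),
    (forall e, ev D e = \sum_(a <- l) a.1 * ind C a.2 e) /\
    pairN D N = \sum_(a <- l) a.1 * nu a.2.
  by apply: IH => b bl; apply: Hl; rewrite in_cons bl orbT.
have [d [d1 d2]] := Hrep (Hl a (mem_head _ _)).
exists (sc a.1 d ++ D); split => [e|].
  by rewrite ev_cat ev_sc d1 H1 big_cons.
by rewrite pairN_cat pairN_sc -d2 H2 big_cons.
Qed.

Lemma lc_value (x : T) (I : C) : lc_integral nu (kend f x) I -> I = pairN (Rep x) N.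
Proof.
case=> l [Halg _ Hphi HI].
have [D [HD1 HD2]] := lc_list Halg.
have := pair0 nl HN (d := D ++ sc (-1) (Rep x)).
rewrite pairN_cat pairN_sc HD2 -HI.
have Hz : forall e, ev (D ++ sc (-1) (Rep x)) e = 0.
  move=> e; rewrite ev_cat ev_sc ev_Rep HD1.
  have -> : \sum_(a <- l) a.1 * ind C a.2 e = kend f x e by rewrite Hphi.
  by rewrite mulN1r subrr.
move/(_ Hz)/eqP; rewrite mulN1r subr_eq0 => /eqP.
done.
Qed.

End LcValue.

End RepSec.
Section Pieces.
Variable T : rtree.
Local Notation o := (troot T).
Local Notation par := (@par T).
Variable R : realType.
Local Notation C := (R[i] : numFieldType).
Variable f : T -> T -> R[i].

Fixpoint tln (n : nat) (x : T) : seq (C * set (ends T)) :=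
  match n with
  | 0 => [::]
  | n'.+1 => (f x (par x) * (fext f o (par x))^-1, basic (par x) [:: x]) ::
             [seq (f x (par x) * a.1, a.2) | a <- tln n' (par x)]
  end.

Definition PD (l : seq (C * set (ends T))) : Prop :=
  forall i j, (i < j < size l)%N ->
    (nth (0, set0) l i).2 `&` (nth (0, set0) l j).2 = set0.

Lemma PD_cons a l : (forall b, b \in l -> a.2 `&` b.2 = set0) -> PD l -> PD (a :: l).
Proof.
move=> Ha Hl [|i] [|j] //=.
- by rewrite ltnS => jl; apply: Ha; apply: mem_nth.
- by rewrite !ltnS => H; apply: Hl.
Qed.

Lemma PD_map k l : PD l -> PD [seq (k * a.1, a.2) | a <- l].
Proof.
move=> H i j /andP [ij]; rewrite size_map => jl.
rewrite !(nth_map (0, set0)) ?(ltn_trans ij) //=.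
by apply: H; rewrite ij.
Qed.

Definition Tl (x : T) := tln (depth x) x.

Lemma Tl_par (x : T) : x != o -> Tl x =
  (f x (par x) * (fext f o (par x))^-1, basic (par x) [:: x]) ::
  [seq (f x (par x) * a.1, a.2) | a <- Tl (par x)].
Proof. by move=> xo; rewrite /Tl (depth_par xo). Qed.

Lemma Tl_o : Tl o = [::].
Proof. by rewrite /Tl depth_o. Qed.

Lemma Tl_props (x : T) :
  [/\ forall a, a \in Tl x -> Defs.in_alg a.2,
      forall a, a \in Tl x -> a.2 `&` bd x = set0,
      PD (Tl x) &
      forall e, \sum_(a <- Tl x) a.1 * ind C a.2 e =
                if `[< bd x e >] then 0 else kend f x e].
Proof.
elim/depth_ind: x => [|x xo [IH1 IH2 IH3 IH4]].
  rewrite Tl_o; split => //; first by move=> i j /andP [_]; rewrite ltn0.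
  by move=> e; rewrite big_nil (asboolT (bd_o e)).
have cx : child (par x) x by rewrite /child xo eqxx.
have sub : forall e, bd x e -> bd (par x) e by move=> e; apply: bd_par.
have bsub : forall e, basic (par x) [:: x] e -> bd (par x) e by move=> e [].
rewrite Tl_par //; split.
- move=> a; rewrite in_cons => /orP [/eqP -> /=|].
    by apply: in_alg_basic; rewrite /= cx.
  by case/mapP => b bin -> /=; apply: IH1.
- move=> a; rewrite in_cons => /orP [/eqP -> /=|].
    apply/seteqP; split => e // [[_ H] bx]; apply: (H x) => //; exact: mem_head.
  case/mapP => b bin -> /=; apply/seteqP; split => e // [H1 H2].
  have : (b.2 `&` bd (par x)) e by split => //; apply: sub.
  by rewrite (IH2 b bin).
- apply: PD_cons; last exact: PD_map.
  move=> b /mapP [c cin ->] /=; apply/seteqP; split => e // [H1 H2].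
  have : (c.2 `&` bd (par x)) e by split => //; apply: bsub.
  by rewrite (IH2 c cin).
- move=> e; rewrite big_cons big_map /=.
  rewrite (eq_bigr (fun a => f x (par x) * (a.1 * ind C a.2 e))); last first.
    by move=> a _; rewrite mulrA.
  rewrite -big_distrr /= IH4.
  case: (pselect (bd x e)) => H.
    rewrite (asboolT H) (asboolT (sub _ H)) mulr0 addr0 (indF C) ?mulr0 //.
    by case=> _ /(_ x (mem_head _ _)).
  rewrite (asboolF H).
  case: (pselect (bd (par x) e)) => H'.
    rewrite (asboolT H') mulr0 addr0 (indT C) ?mulr1; last first.
      by split => // y; rewrite mem_seq1 => /eqP ->.
    by rewrite (kend_out _ xo H) (kend_in _ H') .
  rewrite (asboolF H') (indF C) ?mulr0 ?add0r ?(kend_out _ xo H) //.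
  by move/bsub.
Qed.

Definition pieces (x : T) := ((fext f o x)^-1, bd x) :: Tl x.

Lemma lc_pieces (nu : set (ends T) -> C) (x : T) :
  lc_integral nu (kend f x) (\sum_(a <- pieces x) a.1 * nu a.2).
Proof.
have [H1 H2 H3 H4] := Tl_props x.
exists (pieces x); split => //.
- move=> a; rewrite in_cons => /orP [/eqP -> /=|]; [exact: in_alg_bd|exact: H1].
- apply: PD_cons => // b bin; rewrite setIC; exact: H2.
- move=> e; rewrite big_cons /=.
  have -> : \sum_(a <- Tl x) a.1 * (e \in a.2)%:R = \sum_(a <- Tl x) a.1 * ind C a.2 e by [].
  rewrite H4; case: (pselect (bd x e)) => H.
    by rewrite (asboolT H) addr0 (kend_in _ H) /= (mem_set H) mulr1.
  by rewrite (asboolF H) /= (memNset H) mulr0 add0r.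
Qed.

End Pieces.
Section RepNuh.
Variable T : rtree.
Local Notation o := (troot T).
Local Notation par := (@par T).
Variable R : realType.
Local Notation C := (R[i] : numFieldType).
Variable f : T -> T -> R[i].
Hypothesis Hf0 : forall x y : T, adj x y -> f x y != 0.
Hypothesis Hi : forall x y : T, adj x y -> f x y * f y x != 1.

Lemma adj_par1 (x : T) : x != o -> adj (par x) x.
Proof. by move=> xo; rewrite /adj xo eqxx orbT. Qed.
Lemma adj_par2 (x : T) : x != o -> adj x (par x).
Proof. by move=> xo; rewrite /adj xo eqxx. Qed.

Lemma fo_nz (x : T) : fext f o x != 0.
Proof.
elim/depth_ind: x => [|x xo IH]; first by rewrite fext_self oner_eq0.
by rewrite fext_o_par // mulf_neq0 // Hf0 // adj_par1.
Qed.

Lemma den_nz (x : T) : x != o -> 1 - f (par x) x * f x (par x) != 0.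
Proof. by move=> xo; rewrite subr_eq0 eq_sym Hi // adj_par1. Qed.

Lemma rep_to_nuh (h N : T -> C) : (forall x, pairN (Rep f x) N = h x) ->
  N o = h o /\ forall x, x != o -> N x = nuh f h x.
Proof.
move=> H; split; first by rewrite -H pairN_Rep_o.
move=> x xo; rewrite /nuh -(H x) -(H (par x)) pairN_Rep // /cx fext_o_par //.
have a0 := fo_nz (par x); have b0 : f (par x) x != 0 by rewrite Hf0 // adj_par1.
have d0 := den_nz xo.
set a := fext f o (par x) in a0 *; set b := f (par x) x in b0 d0 *.
set c := f x (par x) in d0 *; set P := pairN (Rep f (par x)) N.
field.
by rewrite d0 a0 b0.
Qed.

Lemma nuh_to_rep (h N : T -> C) : N o = h o -> (forall x, x != o -> N x = nuh f h x) ->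
  forall x, pairN (Rep f x) N = h x.
Proof.
move=> H0 H1; elim/depth_ind => [|x xo IH]; first by rewrite pairN_Rep_o.
rewrite pairN_Rep // IH H1 // /nuh /cx fext_o_par //.
have a0 := fo_nz (par x); have b0 : f (par x) x != 0 by rewrite Hf0 // adj_par1.
have d0 := den_nz xo.
set a := fext f o (par x) in a0 *; set b := f (par x) x in b0 d0 *.
set c := f x (par x) in d0 *.
field.
by rewrite d0 a0 b0.
Qed.

End RepNuh.

Section Construct.
Variable T : rtree.
Variable R : realType.
Local Notation C := (R[i] : numFieldType).
Hypothesis nl : no_leaves T.
Variable N : T -> C.
Hypothesis HN : FCA N.

Definition nuN (A : set (ends T)) : C :=
  pairN (xget [::] [set d : seq (T * C) | forall e, ev d e = ind C A e]) N.

Lemma nuN_wd A (d : seq (T * C)) : (forall e, ev d e = ind C A e) -> nuN A = pairN d N.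
Proof.
move=> Hd; have := xgetI [::] (P := [set d : seq (T * C) | forall e, ev d e = ind C A e]) Hd.
set d0 := xget _ _ => H0.
have := pair0 nl HN (d := d0 ++ sc (-1) d).
rewrite /nuN -/d0 pairN_cat pairN_sc mulN1r => H.
apply/eqP; rewrite -subr_eq0; apply/eqP; apply: H => e.
by rewrite ev_cat ev_sc H0 Hd mulN1r subrr.
Qed.

Lemma nuN_rep A : Defs.in_alg A ->
  exists d : seq (T * C), (forall e, ev d e = ind C A e) /\ nuN A = pairN d N.
Proof.
move=> HA; have [d [Hd _]] := dist_rep_alg R HA.
by exists d; split => //; apply: nuN_wd.
Qed.

Lemma nuN_bd y : nuN (bd y) = N y.
Proof. by rewrite (nuN_wd (d := [:: (y, 1)])) ?pair1 ?mul1r // => e; rewrite ev1 mul1r. Qed.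

Lemma nuN_dist : Defs.distribution nuN.
Proof.
move=> A B HA HB AB.
have [dA [HdA ->]] := nuN_rep HA; have [dB [HdB ->]] := nuN_rep HB.
rewrite (nuN_wd (d := dA ++ dB)) ?pairN_cat // => e.
by rewrite ev_cat HdA HdB ind_union.
Qed.

End Construct.
Section AS.
Variable K : numFieldType.

Definition AS (t : nat -> K) (s : K) : Prop :=
  cvgn (series (fun n => `|t n|)) /\ series t @ \oo --> s.
Definition CP : Prop := forall u v : nat -> K, (forall n, 0 <= u n) ->
  (forall n, u n <= v n) -> cvgn (series v) -> cvgn (series u).

Lemma seriesE (t : nat -> K) m : series t m = \sum_(0 <= k < m) t k.
Proof. by []. Qed.

Lemma series_lin a b (t1 t2 : nat -> K) :
  series (fun n => a * t1 n + b * t2 n) = (fun m => a * series t1 m + b * series t2 m).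
Proof.
by apply: funext => m; rewrite !seriesE big_split /= -!big_distrr.
Qed.

Lemma AS_lin (hcp : CP) a b t1 t2 s1 s2 : AS t1 s1 -> AS t2 s2 ->
  AS (fun n => a * t1 n + b * t2 n) (a * s1 + b * s2).
Proof.
move=> [c1 l1] [c2 l2]; split.
  apply: (hcp _ (fun n => `|a| * `|t1 n| + `|b| * `|t2 n|)) => //.
    by move=> n; rewrite -!normrM ler_normD.
  rewrite series_lin; apply: cvgP; apply: cvgD; apply: cvgMl_tmp; [exact: c1|exact: c2].
rewrite series_lin; apply: cvgD; exact: cvgMl_tmp.
Qed.

Lemma AS_ext (t t' : nat -> K) s : (forall n, t n = t' n) -> AS t s -> AS t' s.
Proof. by move=> H; have -> : t = t' by apply: funext. Qed.

Lemma AS_ext_s (t : nat -> K) s s' : s = s' -> AS t s -> AS t s'.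
Proof. by move=> ->. Qed.

Lemma sum_delta m (c : K) k :
  \sum_(0 <= i < k) (if i == m then c else 0) = if (m < k)%N then c else 0.
Proof.
elim: k => [|k IH]; first by rewrite big_nil.
rewrite big_nat_recr //= IH.
case: (ltngtP m k) => H.
- by rewrite ltnS (ltnW H) addr0.
- by rewrite ltnS leqNgt H addr0.
- by rewrite H ltnSn add0r.
Qed.

Lemma cvg_delta m (c : K) :
  series (fun n => if n == m then c else 0) @ \oo --> c.
Proof.
apply: cvg_near_cst; exists m.+1 => // n /= Hn.
by rewrite seriesE sum_delta Hn.
Qed.

Lemma AS_delta m (c : K) : AS (fun n => if n == m then c else 0) c.
Proof.
split; last exact: cvg_delta.
have -> : (fun n => `|(if n == m then c else 0)|) = (fun n => if n == m then `|c| else 0).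
  by apply: funext => n; case: (n == m); rewrite ?normr0.
apply: cvgP; exact: cvg_delta.
Qed.

Lemma AS_zero : AS (fun _ => 0) 0.
Proof.
have := AS_delta 0 0; apply: AS_ext => n; by case: (n == 0)%N.
Qed.

Lemma AS_lim_fin (t : nat -> K) s M : series t @ \oo --> s ->
  (forall n, (M <= n)%N -> t n = 0) -> s = \sum_(0 <= n < M) t n.
Proof.
move=> H HM.
have H2 : series t @ \oo --> \sum_(0 <= n < M) t n.
  apply: cvg_near_cst; exists M => // n /= Hn.
  rewrite seriesE (@big_cat_nat _ _ _ M 0 n _ _ (leq0n M) Hn) /= [X in _ + X]big_nat_cond.
  rewrite [X in _ + X = _]big1 ?addr0 //.
  by move=> i /andP [/andP [Mi _] _]; apply: HM.
exact: (norm_cvg_unique H H2).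
Qed.

End AS.
Section CPC.
Variable R : realType.
Local Open Scope complex_scope.

Lemma normC_real (r : R) : `|r%:C| = (`|r|)%:C.
Proof. by rewrite normc_def /= expr0n /= addr0 sqrtr_sqr. Qed.

Lemma absRe_le (z : R[i]) : `|complex.Re z| <= complex.Re `|z|.
Proof.
rewrite normc_def.
have -> : complex.Re (Num.sqrt (complex.Re z ^+ 2 + complex.Im z ^+ 2))%:C = Num.sqrt (complex.Re z ^+ 2 + complex.Im z ^+ 2) by [].
rewrite -sqrtr_sqr ler_wsqrtr //.
by rewrite lerDl sqr_ge0.
Qed.

Lemma Re_series (t : nat -> R[i]) m : complex.Re (series t m) = series (fun n => complex.Re (t n)) m.
Proof. by rewrite !seriesE raddf_sum. Qed.

Lemma real_series (t : nat -> R) m : (series t m)%:C = series (fun n => (t n)%:C) m :> R[i].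
Proof. by rewrite !seriesE raddf_sum. Qed.

Lemma real_of_ge0 (z : R[i]) : 0 <= z -> z = (complex.Re z)%:C /\ 0 <= complex.Re z.
Proof. by case: z => a b; rewrite lecE /= => /andP [/eqP -> H]; split. Qed.

Lemma CP_C : CP (R[i] : numFieldType).
Proof.
move=> u v u0 uv Hv.
set L := lim (series v @ \oo) in Hv.
have Hvr : series (fun n => complex.Re (v n)) @ \oo --> complex.Re L.
  apply/cvgrPdist_lt => eps e0.
  have e0' : (0 : R[i]) < eps%:C by rewrite ltcR.
  move/cvgrPdist_lt: Hv => /(_ _ e0'); apply: filterS => n.
  rewrite -Re_series -raddfB => H; apply: le_lt_trans (absRe_le _) _.
  by move: H; rewrite ltcE => /andP [_].
have ur0 : forall n, u n = (complex.Re (u n))%:C /\ 0 <= complex.Re (u n).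
  by move=> n; apply: real_of_ge0.
have urv : forall n, complex.Re (u n) <= complex.Re (v n).
  by move=> n; move: (uv n); rewrite lecE => /andP [_].
have Hur : cvgn (series (fun n => complex.Re (u n))).
  apply: (@series_le_cvg R _ (fun n => complex.Re (v n))).
  - by move=> n; case: (ur0 n).
  - by move=> n; apply: le_trans (urv n); case: (ur0 n).
  - exact: urv.
  - exact: cvgP Hvr.
set Lr := lim _ in Hur.
have uE : u = (fun n => (complex.Re (u n))%:C) by apply: funext => n; case: (ur0 n).
apply/cvg_ex; exists (Lr%:C); apply/cvgrPdist_lt => eps e0.
have : (0 : R[i]) < eps by [].
rewrite ltcE => /andP [/eqP Ie Re0].
move/cvgrPdist_lt: Hur => /(_ _ Re0); apply: filterS => n H.
rewrite uE -real_series -rmorphB normC_real.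
have -> : eps = (complex.Re eps)%:C.
  by move: Ie; clear; case: eps => a b /= ->.
by rewrite ltcR.
Qed.

End CPC.
Section Analytic.
Variable T : rtree.
Local Notation o := (troot T).
Local Notation par := (@par T).

Lemma pickle_invE (n : nat) (y : T) : pickle_inv n = Some y -> pickle y = n.
Proof. by move=> H; have := @pickle_invK T n; rewrite H. Qed.

Lemma no_2cycle (v y : T) : v != o -> child v y -> par v != y.
Proof.
move=> vo cy; apply/eqP => E.
have d1 := depth_par vo; have d2 := child_depth cy.
by move: d1; rewrite E d2 => /eqP; rewrite -addn2 -{1}[depth v]addn0 eqn_add2l.
Qed.

Definition delta (K : numFieldType) (v : T) (c : K) (n : nat) : K :=
  if v != o then (if n == pickle (par v) then c else 0) else 0.

Lemma AS_deltav (K : numFieldType) (v : T) (c : K) :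
  AS (delta v c) (if v != o then c else 0).
Proof.
rewrite /delta; case: (v != o); first exact: AS_delta.
exact: AS_zero.
Qed.

Lemma rterm_adj (K : numFieldType) (v : T) (g : T -> K) n :
  rterm (@adj T) v g n = rterm (@child T) v g n + delta v (g (par v)) n.
Proof.
rewrite /rterm /delta; case E: (pickle_inv n) => [y|].
  have Py := pickle_invE E.
  have pE : (n == pickle (par v)) = (y == par v).
    by rewrite -Py; apply/eqP/eqP => [/(pcan_inj pickleK_inv)|->].
  rewrite adjE pE; case cy: (child v y).
    rewrite orbT; case vo: (v != o); last by rewrite addr0.
    by rewrite eq_sym (negbTE (no_2cycle vo cy)) addr0.
  rewrite orbF add0r; case vo: (v != o) => /=; last by [].
  by case: (eqVneq (par v) y) => [->|ne] //.
rewrite add0r; case: (v != o) => //; case: eqP => // En.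
by move: E; rewrite En pickleK_inv.
Qed.

Lemma sum_sel_if (K : numFieldType) (G : T -> K) (cs : seq T) x : uniq cs ->
  \sum_(c <- cs) (if x == c then G c else 0) = if x \in cs then G x else 0.
Proof.
elim: cs => [|c cs IH]; first by rewrite big_nil.
rewrite /= big_cons in_cons => /andP [ncs ucs]; rewrite IH //.
case: (eqVneq x c) => [->|xc] /=.
  by rewrite (negbTE ncs) addr0.
by rewrite add0r.
Qed.

Lemma FCA_abs (K : numFieldType) (N : T -> K) :
  (forall v, abs_sum (@child T) v N (N v)) -> FCA N.
Proof.
move=> H v cs ucs mcs; have [_ Hs] := H v.
set M := (\max_(c <- cs) (pickle c).+1)%N.
have HM : forall c, c \in cs -> (pickle c < M)%N.
  move=> c cin; rewrite /M (big_rem _ cin) /=; exact: leq_maxl.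
have rt : forall n, rterm (@child T) v N n =
    \sum_(c <- cs) (if n == pickle c then N c else 0).
  move=> n; rewrite /rterm; case E: (pickle_inv n) => [y|].
    have Py := pickle_invE E.
    rewrite -Py (eq_bigr (fun c => if y == c then N c else 0)).
      by rewrite sum_sel_if // mcs.
    by move=> c _; rewrite (inj_eq (pcan_inj (@pickleK_inv T))).
  rewrite big1 // => c _; case: eqP => // En.
  by move: E; rewrite En pickleK_inv.
rewrite (AS_lim_fin (M := M) Hs).
  under eq_bigr => n _ do rewrite rt.
  rewrite exchange_big /=; apply: eq_big_seq => c cin.
  by rewrite sum_delta HM.
move=> n Mn; rewrite rt big_seq big1 // => c cin.
case: eqP => // En; have := HM c cin; rewrite -En ltnNge Mn //.
Qed.

End Analytic.
Section Eigen.
Variable T : rtree.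
Local Notation o := (troot T).
Local Notation par := (@par T).
Variable R : realType.
Local Notation C := (R[i] : numFieldType).
Variables (p : T -> T -> R) (lam : R[i]) (f : T -> T -> R[i]) (u : T -> R[i]) (h : T -> R[i]).
Hypothesis Hp_pos : forall x y, adj x y -> 0 < p x y.
Hypothesis Hi : forall x y : T, adj x y -> f x y * f y x != 1.
Hypothesis Hu_abs : forall x, abs_sum (@adj T) x (fun v => (p x v)%:C%C * f v x) (u x).
Hypothesis Hu_ne : forall x, u x != lam.
Hypothesis Hiii : forall x y, adj x y ->
  lam * f x y = (p x y)%:C%C + (u x - (p x y)%:C%C * f y x) * f x y.

Lemma pC_nz x y : adj x y -> (p x y)%:C%C != 0 :> R[i].
Proof.
move=> a; have := Hp_pos a; rewrite lt_def => /andP [H _].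
by apply: contra H => /eqP [->].
Qed.

Lemma Lu_nz x : lam - u x != 0.
Proof. by rewrite subr_eq0 eq_sym Hu_ne. Qed.

Lemma den1_nz x y : adj x y -> 1 - f x y * f y x != 0.
Proof. by move=> a; rewrite subr_eq0 eq_sym Hi. Qed.

Lemma edge x y : adj x y ->
  (p x y)%:C%C * (1 - f x y * f y x) = f x y * (lam - u x).
Proof. by move=> a; rewrite [RHS]mulrBr [f x y * lam]mulrC Hiii //; ring. Qed.

Lemma Pexpr x y : adj x y ->
  (p x y)%:C%C = f x y * (lam - u x) / (1 - f x y * f y x).
Proof. by move=> a; rewrite -edge // mulfK // den1_nz. Qed.

Lemma f_nz x y : adj x y -> f x y != 0.
Proof.
move=> a; apply/eqP => E; have := edge a; rewrite E !mul0r subr0 mulr1.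
by move/eqP; rewrite (negbTE (pC_nz a)).
Qed.

Lemma child_id v y : child v y ->
  (lam - u v) * nuh f h y =
  fext f o v * ((p v y)%:C%C * h y - h v * ((p v y)%:C%C * f y v)).
Proof.
move=> cy; have yo : y != o by case/andP: cy.
have py := child_par cy.
have avy : adj v y by rewrite adjE cy orbT.
rewrite /nuh fext_o_par // py (Pexpr avy).
have d0 := den1_nz avy.
field.
by rewrite d0.
Qed.

Lemma par_id v : v != o ->
  (lam - u v) * nuh f h v = fext f o v * ((lam - u v) * h v +
     (p v (par v))%:C%C * f (par v) v * h v - (p v (par v))%:C%C * h (par v)).
Proof.
move=> vo; have a1 := adj_par2 vo; have a2 := adj_par1 vo.
rewrite /nuh (Pexpr a1).
have d1 := den1_nz a1; have d2 := den1_nz a2.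
field.
exact: d1.
Qed.

Definition Nh (y : T) : C := if y == o then h o else nuh f h y.

Lemma deltaE (v : T) (c : C) n : delta v c n = delta v 1 n * c.
Proof. by rewrite /delta; case: (v != o); case: (n == _); rewrite ?mul1r ?mul0r. Qed.

Lemma Hf0 : forall x y : T, adj x y -> f x y != 0.
Proof. exact: f_nz. Qed.

Lemma A2 : eigenfun p lam h -> forall v, abs_sum (@child T) v Nh (Nh v).
Proof.
move=> Heig v.
set a := fext f o v / (lam - u v); set b := - a * h v.
set g1 := fun y => (p v y)%:C%C * h y; set g2 := fun y => (p v y)%:C%C * f y v.
have H1 : AS (rterm (@adj T) v g1) (lam * h v) := Heig v.
have H2 : AS (rterm (@adj T) v g2) (u v) := Hu_abs v.
have H3 := AS_lin (@CP_C R) a b H1 H2.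
set c := - (a * g1 (par v) + b * g2 (par v)).
have H4 := AS_lin (@CP_C R) 1 1 H3 (AS_deltav v c).
have L0 := Lu_nz v; have F0 := fo_nz Hf0 v.
apply: (AS_ext_s _ (AS_ext _ H4)).
  rewrite !mul1r /Nh; case: (eqVneq v o) => [E|vo] /=.
    rewrite /b /a E fext_self; rewrite E in L0; field; by rewrite L0.
  apply: (mulfI L0); rewrite par_id // /c /b /a /g1 /g2.
  field; by rewrite L0.
move=> n; rewrite !mul1r !rterm_adj (deltaE v c) (deltaE v (g1 (par v))) (deltaE v (g2 (par v))).
set dd := delta v 1 n.
have -> : rterm (@child T) v Nh n = a * rterm (@child T) v g1 n + b * rterm (@child T) v g2 n.
  rewrite /rterm; case: (pickle_inv n) => [y|]; last by rewrite !mulr0 addr0.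
  case cy: (child v y); last by rewrite !mulr0 addr0.
  have yo : y != o by case/andP: cy.
  rewrite /Nh (negbTE yo); apply: (mulfI L0); rewrite child_id // /b /a /g1 /g2.
  field; by rewrite L0.
rewrite /c; ring.
Qed.

Lemma A3 (N : T -> C) : (forall v, abs_sum (@child T) v N (N v)) -> N o = h o ->
  (forall x, x != o -> N x = nuh f h x) -> eigenfun p lam h.
Proof.
move=> HN HN0 HN1 v.
set k := (lam - u v) / fext f o v.
set g1 := fun y => (p v y)%:C%C * h y; set g2 := fun y => (p v y)%:C%C * f y v.
have H2 : AS (rterm (@adj T) v g2) (u v) := Hu_abs v.
have H3 := AS_lin (@CP_C R) (h v) k H2 (HN v).
set c := g1 (par v) - h v * g2 (par v).
have H4 := AS_lin (@CP_C R) 1 1 H3 (AS_deltav v c).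
have L0 := Lu_nz v; have F0 := fo_nz Hf0 v.
change (AS (rterm (@adj T) v g1) (lam * h v)).
apply: (AS_ext_s _ (AS_ext _ H4)).
  rewrite !mul1r; case: (eqVneq v o) => [E|vo] /=.
    rewrite /k E HN0 fext_self divr1; ring.
  rewrite HN1 // /k.
  have -> : (lam - u v) / fext f o v * nuh f h v = (lam - u v) * nuh f h v / fext f o v.
    by rewrite mulrAC.
  rewrite par_id // /c /g1 /g2; field; by rewrite F0.
move=> n; rewrite !mul1r !rterm_adj (deltaE v c) (deltaE v (g1 (par v))) (deltaE v (g2 (par v))).
set dd := delta v 1 n.
have -> : rterm (@child T) v g1 n = h v * rterm (@child T) v g2 n + k * rterm (@child T) v N n.
  rewrite /rterm; case: (pickle_inv n) => [y|]; last by rewrite !mulr0 addr0.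
  case cy: (child v y); last by rewrite !mulr0 addr0.
  have yo : y != o by case/andP: cy.
  rewrite HN1 // /k.
  have -> : (lam - u v) / fext f o v * nuh f h y = (lam - u v) * nuh f h y / fext f o v.
    by rewrite mulrAC.
  rewrite child_id // /g1 /g2; field; by rewrite F0.
rewrite /c; ring.
Qed.

End Eigen.
Section Uniq.
Variable T : rtree.
Variable R : realType.
Variable f : T -> T -> R[i].
Hypothesis nl : no_leaves T.
Hypothesis Hf0 : forall x y : T, adj x y -> f x y != 0.
Hypothesis Hi : forall x y : T, adj x y -> f x y * f y x != 1.

Lemma uniq_lemma (h : T -> R[i]) (nu : set (ends T) -> R[i]) :
  strong_distribution nu -> (forall x, lc_integral nu (kend f x) (h x)) ->
  nu (bd (troot T)) = h (troot T) /\
  forall x, x != troot T -> nu (bd x) = nuh f h x.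
Proof.
case=> Hd Hs Hint.
have HN := FCA_dist Hd.
have Hrep : forall A, Defs.in_alg A -> exists d : seq (T * (R[i] : numFieldType)),
    (forall e, ev d e = ind (R[i] : numFieldType) A e) /\ nu A = pairN d (fun w => nu (bd w)).
  move=> A HA; have [d [He Hn]] := dist_rep_alg R HA.
  by exists d; split => //; apply: Hn.
have Hx : forall x, pairN (Rep f x) (fun w => nu (bd w)) = h x.
  by move=> x; rewrite -(lc_value nl HN Hrep (Hint x)).
exact: (rep_to_nuh Hf0 Hi Hx).
Qed.

End Uniq.

Unset Implicit Arguments.

Theorem theorem3p4 (R : realType) (T : rtree) (p : T -> T -> R)
  (lam : R[i]) (f : T -> T -> R[i]) :
  no_leaves T ->
  nn_stochastic p ->
  (* (i) *)
  (forall x y : T, adj x y -> f x y * f y x != 1) ->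
  (* (ii) and (iii), with u(x,x) = sum_{v ~ x} p(x,v) f(v,x) *)
  (forall x : T, exists uxx : R[i],
     [/\ abs_sum (@adj T) x (fun v => (p x v)%:C%C * f v x) uxx,
         uxx != lam
       & forall y, adj x y ->
           lam * f x y = (p x y)%:C%C + (uxx - (p x y)%:C%C * f y x) * f x y]) ->
  forall h : T -> R[i],
    (eigenfun p lam h <->
       exists nu : set (ends T) -> R[i],
         strong_distribution nu /\ forall x, lc_integral nu (kend f x) (h x))
    /\
    (forall nu : set (ends T) -> R[i],
       strong_distribution nu -> (forall x, lc_integral nu (kend f x) (h x)) ->
       nu setT = h (troot T) /\
       forall x : T, x != troot T -> nu (bd x) = nuh f h x).
Proof.
move=> nl [p0 [ppos _]] Hi Hu h.
have Hp_pos : forall x y, adj x y -> 0 < p x y by move=> x y; rewrite ppos.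
have [u Hu'] := choice Hu.
have Hu_abs : forall x, abs_sum (@adj T) x (fun v => (p x v)%:C%C * f v x) (u x).
  by move=> x; case: (Hu' x).
have Hu_ne : forall x, u x != lam by move=> x; case: (Hu' x).
have Hiii : forall x y, adj x y ->
    lam * f x y = (p x y)%:C%C + (u x - (p x y)%:C%C * f y x) * f x y.
  by move=> x y; case: (Hu' x) => _ _; apply.
have Hf0 := f_nz Hp_pos Hiii.
split; last first.
  move=> nu Hs Hint; have [N0 N1] := uniq_lemma nl Hf0 Hi Hs Hint.
  split => //; rewrite -N0; congr nu.
  by apply/seteqP; split => e // _; exact: bd_o.
split.
  move=> Heig.
  have HNa := A2 Hp_pos Hi Hu_abs Hu_ne Hiii Heig.
  have HN := FCA_abs HNa.
  exists (nuN (Nh f h)); split.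
    split; first exact (nuN_dist nl HN).
    move=> x.
    have -> : (fun y => nuN (Nh f h) (bd y)) = Nh f h.
      by apply: funext => y; exact (nuN_bd nl HN y).
    by rewrite (nuN_bd nl HN); exact: HNa.
  move=> x.
  have Hl := lc_pieces f (nuN (Nh f h)) x.
  have E := lc_value nl HN (nuN_rep nl HN) Hl.
  have N0 : Nh f h (troot T) = h (troot T) by rewrite /Nh eqxx.
  have N1 : forall x, x != troot T -> Nh f h x = nuh f h x.
    by move=> y yo; rewrite /Nh (negbTE yo).
  have Hx : h x = \sum_(a <- pieces f x) a.1 * nuN (Nh f h) a.2.
    by rewrite E (nuh_to_rep Hf0 Hi N0 N1).
  by rewrite Hx.
case=> nu [Hs Hint].
have [N0 N1] := uniq_lemma nl Hf0 Hi Hs Hint.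
exact: (A3 Hp_pos Hi Hu_abs Hu_ne Hiii (N := fun w => nu (bd w)) Hs.2 N0 N1).
Qed.
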